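(* Let $n\geq 1$. Suppose $\mathbf A\subseteq\mathbf B$ are finite equidistributed measured boolean algebras ($\mathbf A$ a subalgebra of $\mathbf B$ with the restricted measure), $g$ is an automorphism of $\mathbf A$ and $f$ is an automorphism of $\mathbf B$ such that $f|_{\mathbf A}=g^n$. Then there is a finite equidistributed measured boolean algebra $\mathbf C$ containing $\mathbf B$ as a measured subalgebra and an automorphism $h$ of $\mathbf C$ extending $g$ such that $h^n|_{\mathbf B}=f$. The same holds with ''equidistributed'' replaced throughout by ''equidistributed dyadic''.
   Context: A finite boolean algebra equipped with a finitely additive probability measure is equidistributed if all its atoms have the same positive measure, and equidistributed dyadic if it has $2^k$ atoms each of measure $2^{-k}$ for some $k\ge 0$. For equidistributed algebras every automorphism (permutation of atoms) is measure preserving. *)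

(* Defs.v *)
From HB Require Import structures.
From mathcomp Require Import all_boot all_order all_algebra.
From mathcomp Require Import reals.
Set Implicit Arguments. Unset Strict Implicit. Unset Printing Implicit Defensive.
Import Order.TTheory GRing.Theory Num.Theory.
Local Open Scope ring_scope.

(* A finite boolean algebra is represented as the powerset algebra {set T}
   of a finite type T (every finite boolean algebra is of this form). *)

Definition is_atom (T : finType) (a : {set T}) : bool :=
  (a != set0) && [forall b : {set T}, (b \subset a) ==> ((b == set0) || (b == a))].

Definition fa_prob (R : realType) (T : finType) (mu : {set T} -> R) : Prop :=
  [/\ forall x, 0 <= mu x,
      mu setT = 1 &
      forall x y, x :&: y = set0 -> mu (x :|: y) = mu x + mu y].

Definition equidistributed (R : realType) (T : finType) (mu : {set T} -> R) : Prop :=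
  exists c : R, 0 < c /\ forall a, is_atom a -> mu a = c.

Definition equidistributed_dyadic (R : realType) (T : finType) (mu : {set T} -> R)
  : Prop :=
  exists k : nat, #|[set a : {set T} | is_atom a]| = (2 ^ k)%N /\
    forall a, is_atom a -> mu a = (2%:R ^+ k)^-1.

Definition equi (dy : bool) (R : realType) (T : finType) (mu : {set T} -> R) : Prop :=
  if dy then equidistributed_dyadic mu else equidistributed mu.

Definition is_bhom (T1 T2 : finType) (phi : {set T1} -> {set T2}) : Prop :=
  [/\ phi set0 = set0, phi setT = setT,
      forall x y, phi (x :|: y) = phi x :|: phi y,
      forall x y, phi (x :&: y) = phi x :&: phi y &
      forall x, phi (~: x) = ~: phi x].

Definition is_bauto (T : finType) (g : {set T} -> {set T}) : Prop :=
  is_bhom g /\ bijective g.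

Definition measured_embedding (R : realType) (T1 T2 : finType)
  (mu1 : {set T1} -> R) (mu2 : {set T2} -> R) (iota : {set T1} -> {set T2}) : Prop :=
  [/\ is_bhom iota, injective iota & forall x, mu2 (iota x) = mu1 x].

(* Main.v *)
Require Import Defs.
From HB Require Import structures.
From mathcomp Require Import all_boot all_order all_algebra.
From mathcomp Require Import reals.
Set Implicit Arguments. Unset Strict Implicit. Unset Printing Implicit Defensive.
Import Order.TTheory GRing.Theory Num.Theory.
Local Open Scope ring_scope.

Lemma atom_set1 (T : finType) (x : T) : is_atom [set x].
Proof.
apply/andP; split; first by apply/set0Pn; exists x; rewrite in_set1.
by apply/forallP => b; apply/implyP; rewrite subset1 orbC.
Qed.

Lemma atom_is_set1 (T : finType) (a : {set T}) : is_atom a -> exists x, a = [set x].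
Proof.
case/andP => /set0Pn [x xa] /forallP /(_ [set x]).
rewrite sub1set xa /= => /orP [|/eqP <-]; last by exists x.
by move/eqP/setP/(_ x); rewrite in_set1 in_set0 eqxx.
Qed.

Lemma card_atoms (T : finType) : #|[set a : {set T} | is_atom a]| = #|T|.
Proof.
have -> : [set a : {set T} | is_atom a] = [set [set x] | x in [set: T]].
  apply/setP => a; rewrite inE; apply/idP/imsetP.
    by move/atom_is_set1 => [x ->]; exists x; rewrite ?inE.
  by move=> [x _ ->]; apply: atom_set1.
by rewrite card_imset ?cardsT //; apply: set1_inj.
Qed.

Lemma fa_set0 (R : realType) (T : finType) (mu : {set T} -> R) :
  fa_prob mu -> mu set0 = 0.
Proof.
case=> _ _ hadd; have := hadd set0 set0; rewrite setI0 setU0 => /(_ erefl) e.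
by have := congr1 (fun z => z - mu set0) e; rewrite /= subrr addrK.
Qed.

Lemma fa_card (R : realType) (T : finType) (mu : {set T} -> R) (c : R) :
  fa_prob mu -> (forall t, mu [set t] = c) -> forall S, mu S = #|S|%:R * c.
Proof.
move=> hp h1 S; move: {2}#|S| (erefl #|S|) => k; elim: k S => [|k IH] S hS.
  by move/eqP: hS; rewrite cards_eq0 => /eqP ->; rewrite fa_set0 // cards0 mul0r.
have : (0 < #|S|)%N by rewrite hS.
case/card_gt0P => x xS.
case: hp => _ _ hadd.
rewrite -{1}(setD1K xS) hadd; last first.
  by apply/setP => y; rewrite !inE; case: eqP => // ->; rewrite eqxx.
have hS1 : #|S :\ x| = k by move: hS; rewrite (cardsD1 x) xS add1n => -[].
rewrite h1 (IH _ hS1).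
by rewrite hS hS1 -addn1 natrD mulrDl mul1r addrC.
Qed.

Lemma equi_const (dy : bool) (R : realType) (T : finType) (mu : {set T} -> R) :
  equi dy mu -> exists c, forall t, mu [set t] = c.
Proof.
case: dy => /=.
  by case=> k [_ h]; exists (2%:R ^+ k)^-1 => t; apply: h; apply: atom_set1.
by case=> c [_ h]; exists c => t; apply: h; apply: atom_set1.
Qed.

Lemma bhom_big (T1 T2 : finType) (phi : {set T1} -> {set T2}) (S : {set T1}) :
  is_bhom phi -> phi S = \bigcup_(a in S) phi [set a].
Proof.
case=> h0 _ hU _ _.
have {1}-> : S = \bigcup_(a in S) [set a].
  apply/setP => x; apply/idP/bigcupP; first by move=> xS; exists x; rewrite ?inE.
  by move=> [a aS]; rewrite inE => /eqP ->.
by rewrite (big_morph phi hU h0).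
Qed.

Lemma bauto_point (T : finType) (f : {set T} -> {set T}) :
  is_bauto f -> exists fp : T -> T, injective fp /\ forall S, f S = fp @: S.
Proof.
case=> hb [finv fK Kf].
have hb' := hb; case: hb' => h0 hT hU hI hC.
have ex : forall b, exists x, f [set b] == [set x].
  move=> b; suff /atom_is_set1 [x ->] : is_atom (f [set b]) by exists x.
  apply/andP; split.
    apply/negP => /eqP e; have : [set b] = set0 by rewrite -(fK [set b]) e -h0 fK.
    by move/setP/(_ b); rewrite in_set1 in_set0 eqxx.
  apply/forallP => c; apply/implyP => cs.
  have e : f (finv c :&: [set b]) = c by rewrite hI Kf; apply/setIidPl.
  have : finv c :&: [set b] \subset [set b] by apply: subsetIr.
  rewrite subset1 => /orP [] /eqP e'; rewrite -e e' ?eqxx ?orbT //.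
  by rewrite h0 eqxx.
pose fp b := xchoose (ex b).
have hfp b : f [set b] = [set fp b] by apply/eqP; apply: (xchooseP (ex b)).
exists fp; split.
  move=> b b' e; apply/set1_inj; rewrite -(fK [set b]) -(fK [set b']).
  by rewrite !hfp e.
move=> S; rewrite (bhom_big S hb).
apply/setP => y; apply/bigcupP/imsetP.
  by move=> [a aS]; rewrite hfp in_set1 => /eqP ->; exists a.
by move=> [a aS ->]; exists a => //; rewrite hfp in_set1.
Qed.

Lemma bhom_point (T1 T2 : finType) (phi : {set T1} -> {set T2}) :
  is_bhom phi -> injective phi ->
  exists alpha : T2 -> T1, (forall S b, (b \in phi S) = (alpha b \in S)) /\
     (forall a, exists b, alpha b = a).
Proof.
move=> hb hinj; have hb' := hb; case: hb' => h0 hT hU hI hC.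
have ex : forall b, exists a, b \in phi [set a].
  move=> b; have : b \in phi setT by rewrite hT inE.
  by rewrite (bhom_big _ hb) => /bigcupP [a _ h]; exists a.
pose alpha b := xchoose (ex b).
have hal b : b \in phi [set alpha b] := xchooseP (ex b).
have uniq b a : b \in phi [set a] -> a = alpha b.
  move=> h; apply/eqP; apply/negP => ne.
  have : b \in phi ([set a] :&: [set alpha b]) by rewrite hI inE h hal.
  suff -> : [set a] :&: [set alpha b] = set0 by rewrite h0 inE.
  by apply/setP => x; rewrite !inE; apply/negP => /andP [/eqP -> /eqP e]; rewrite e eqxx in ne.
exists alpha; split.
  move=> S b; rewrite (bhom_big _ hb); apply/bigcupP/idP.
    by move=> [a aS /uniq <-].
  by move=> h; exists (alpha b).
move=> a; have : phi [set a] != set0.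
  apply/negP => /eqP e; have : [set a] = set0 by apply: hinj; rewrite e h0.
  by move/setP/(_ a); rewrite in_set1 in_set0 eqxx.
by case/set0Pn => b /uniq ->; exists b.
Qed.

Lemma imset_bauto (T : finType) (p : T -> T) : injective p -> is_bauto (fun S : {set T} => p @: S).
Proof.
move=> pinj; have [q pK qK] := injF_bij pinj.
have qinj : injective q by apply: (can_inj qK).
have mem (S : {set T}) z : (p z \in p @: S) = (z \in S) by rewrite mem_imset.
split; first split.
- by rewrite imset0.
- by apply/setP => y; rewrite -[y]qK mem !inE.
- by move=> x y; apply/setP => w; rewrite -[w]qK mem !in_setU !mem.
- by move=> x y; apply/setP => w; rewrite -[w]qK mem !in_setI !mem.
- by move=> x; apply/setP => w; rewrite -[w]qK mem !in_setC !mem.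
have memq (S : {set T}) z : (q z \in q @: S) = (z \in S) by rewrite mem_imset.
exists (fun S : {set T} => q @: S).
  by move=> S; apply/setP => w; rewrite -{1}(pK w) memq mem.
by move=> S; apply/setP => w; rewrite -{1}(qK w) mem memq.
Qed.

Local Close Scope ring_scope.

Section Shift.
Variables (TA TB : finType) (m : nat) (fp : TB -> TB) (gp : TA -> TA) (alpha : TB -> TA).
Hypothesis fpinj : injective fp.
Hypothesis hrel : forall b, alpha (fp b) = iter m.+1 gp (alpha b).

Definition E (x : {ffun 'I_m.+1 -> TB}) k := iter (k %/ m.+1) fp (x (inord (k %% m.+1))).
Definition sh (x : {ffun 'I_m.+1 -> TB}) := [ffun i : 'I_m.+1 => E x i.+1].

Lemma E_ord x (i : 'I_m.+1) : E x i = x i.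
Proof. by rewrite /E divn_small ?modn_small ?inord_val. Qed.

Lemma E_iter x q j : iter q fp (E x j) = E x (q * m.+1 + j).
Proof. by rewrite /E divnMDl // modnMDl iterD. Qed.

Lemma E_sh x k : E (sh x) k = E x k.+1.
Proof.
rewrite {1}/E ffunE inordK ?ltn_pmod // E_iter.
by rewrite addnS -divn_eq.
Qed.

Lemma E_itersh x k i : E (iter k sh x) i = E x (i + k).
Proof. by elim: k i => [|k IH] i; rewrite ?addn0 //= E_sh IH addnS. Qed.

Lemma itersh_full x : iter m.+1 sh x = [ffun i => fp (x i)].
Proof.
apply/ffunP => i; rewrite -(E_ord (iter m.+1 sh x) i) E_itersh [RHS]ffunE -(E_ord x i).
by rewrite -[fp (E x i)]/(iter 1 fp (E x i)) (E_iter x 1) mul1n addnC.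
Qed.

Lemma sh_inj : injective sh.
Proof.
move=> x y e.
have eE k : E x k.+1 = E y k.+1 by rewrite -!E_sh e.
have eE' k : E x k = E y k.
  case: k => [|k] //; apply: fpinj.
  have h1 z : fp (E z 0) = E z m.+1 by have := E_iter z 1 0; rewrite /= mul1n addn0.
  by rewrite !h1 eE.
by apply/ffunP => i; rewrite -!E_ord eE'.
Qed.

Definition P (x : {ffun 'I_m.+1 -> TB}) :=
  [forall i : 'I_m.+1, alpha (x i) == iter i gp (alpha (x ord0))].

Lemma alpha_iter q b : alpha (iter q fp b) = iter (q * m.+1) gp (alpha b).
Proof. elim: q => [|q IH]; first by rewrite mul0n. by rewrite mulSn iterD -IH -hrel. Qed.

Lemma P_E x : P x -> forall k, alpha (E x k) = iter k gp (alpha (x ord0)).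
Proof.
move=> /forallP hP k; rewrite /E alpha_iter (eqP (hP _)) inordK ?ltn_pmod //.
by rewrite -iterD -divn_eq.
Qed.

Lemma P_sh x : P x -> P (sh x).
Proof.
move=> hP; apply/forallP => i; rewrite !ffunE !P_E //.
by rewrite -iterSr.
Qed.
End Shift.

Local Open Scope ring_scope.

Lemma inj_surj (T : finType) (p : T -> T) : injective p -> forall y, exists z, y = p z.
Proof. by move/injF_bij => [q _ qK] y; exists (q y); rewrite qK. Qed.

Lemma core (dy : bool) (R : realType) (m : nat) (TA TB : finType) (alpha : TB -> TA)
  (gp : TA -> TA) (fp : TB -> TB) (s : nat) :
  injective gp -> injective fp ->
  (forall b, alpha (fp b) = iter m.+1 gp (alpha b)) ->
  (forall a, #|[set b | alpha b == a]| = s) ->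
  (forall a, exists b, alpha b = a) ->
  (0 < #|TB|)%N ->
  (dy -> exists k, (#|TB| * s ^ m = 2 ^ k)%N) ->
  exists (TC : finType) (muC : {set TC} -> R) (j : {set TB} -> {set TC})
     (h : {set TC} -> {set TC}),
  [/\ fa_prob muC /\ equi dy muC,
      [/\ is_bhom j, injective j & forall S, muC (j S) = #|S|%:R / #|TB|%:R],
      is_bauto h,
      forall S : {set TA}, h (j [set b | alpha b \in S]) = j [set b | alpha b \in gp @: S] &
      forall y, iter m.+1 h (j y) = j (fp @: y)].
Proof.
move=> gpinj fpinj hrel hs hsurj TBpos hdy.
pose Q := @P TA TB m gp alpha.
pose X : finType := {x : {ffun 'I_m.+1 -> TB} | Q x}.
have Psh (x : X) : Q (sh fp (val x)) by apply: P_sh => //; apply: (valP x).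
pose hX (x : X) : X := Sub (sh fp (val x)) (Psh x).
have hXinj : injective hX.
  by move=> x y e; apply: val_inj; apply: (sh_inj fpinj); have := congr1 val e; rewrite !SubK.
pose pi (x : X) := val x ord0.
pose j (S : {set TB}) := [set x : X | pi x \in S].
pose h (S : {set X}) := hX @: S.
pose muC (S : {set X}) := (#|S|%:R / #|X|%:R : R).
have hsurj' a : exists b, alpha b == a by have [b e] := hsurj a; exists b; rewrite e.
have pisurj b : exists x : X, pi x = b.
  pose y := [ffun i : 'I_m.+1 => if i == ord0 then b else xchoose (hsurj' (iter i gp (alpha b)))].
  have Py : Q y.
    apply/forallP => i; rewrite !ffunE eqxx; case: (i =P ord0) => [->|_] //.
    by rewrite (eqP (xchooseP (hsurj' _))).
  by exists (Sub y Py); rewrite /pi SubK ffunE eqxx.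
have fiber b : #|[set y | Q y && (y ord0 == b)]| = (s ^ m)%N.
  pose F (i : 'I_m.+1) := [pred z | if i == ord0 then z == b else alpha z == iter i gp (alpha b)].
  have -> : [set y | Q y && (y ord0 == b)] = [set y in family F].
    apply/setP => y; rewrite !inE; apply/idP/familyP.
      case/andP => /forallP hP /eqP y0 i; rewrite inE.
      case: (i =P ord0) => [->|_]; first by rewrite y0.
      by rewrite -y0; apply: hP.
    move=> hF; have /eqP y0 : y ord0 == b by have := hF ord0; rewrite inE eqxx.
    rewrite y0 eqxx andbT; apply/forallP => i; have := hF i; rewrite inE.
    by case: (i =P ord0) => [->|_]; rewrite ?y0 ?eqxx.
  rewrite cardsE card_family foldrE big_map big_enum /= big_ord_recl.
  have -> : #|F ord0| = 1%N by rewrite -(card1 b); apply: eq_card => z; rewrite !inE eqxx.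
  rewrite mul1n (eq_bigr (fun _ => s)) ?prod_nat_const ?card_ord //.
  move=> i _; rewrite -(hs (iter (lift ord0 i) gp (alpha b))) cardsE.
  by apply: eq_card => z; rewrite unfold_in /=.
have cj S : #|j S| = (#|S| * s ^ m)%N.
  have -> : #|j S| = #|[set y | Q y && (y ord0 \in S)]|.
    rewrite -(card_imset _ val_inj); apply: eq_card => y; apply/imsetP/idP.
      by move=> [x xS ->]; move: xS; rewrite /j !inE (valP x).
    by rewrite !inE => /andP [Py yS]; exists (Sub y Py); rewrite ?inE /pi SubK.
  rewrite -sum1_card (@partition_big _ _ _ _ _ TB _ (fun y : {ffun 'I_m.+1 -> TB} => y ord0 : TB) (fun b => b \in S)); last first.
    by move=> y; rewrite inE => /andP [].
  rewrite (eq_bigr (fun _ => s ^ m)%N) ?sum_nat_const //.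
  move=> b bS; rewrite -(fiber b) -sum1_card; apply: eq_bigl => y.
  by rewrite !inE; case: eqP => [->|]; rewrite ?bS ?andbT ?andbF.
have cX : #|X| = (#|TB| * s ^ m)%N.
  rewrite -cardsT; have <- : j setT = setT by apply/setP => x; rewrite !inE.
  by rewrite cj cardsT.
have spos : (0 < s)%N.
  have [b0 _] := card_gt0P TBpos; rewrite -(hs (alpha b0)).
  by apply/card_gt0P; exists b0; rewrite inE.
have Xpos : (0 < #|X|)%N by rewrite cX muln_gt0 TBpos expn_gt0 spos.
have Xn0 : (#|X|%:R : R) != 0 by rewrite pnatr_eq0 -lt0n.
exists X, muC, j, h; split.
- split; first split.
  + by move=> S; rewrite /muC divr_ge0.
  + by rewrite /muC cardsT divff.
  + by move=> x y e; rewrite /muC cardsU e cards0 subn0 natrD mulrDl.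
  case: dy hdy => /= hdy.
    have [k hk] := hdy erefl; exists k; split; first by rewrite card_atoms cX.
    by move=> a /atom_is_set1 [x ->]; rewrite /muC cards1 mul1r cX hk natrX.
  exists (#|X|%:R^-1); split; first by rewrite invr_gt0 ltr0n.
  by move=> a /atom_is_set1 [x ->]; rewrite /muC cards1 mul1r.
- split.
  + by split => [||x y|x y|x]; apply/setP => z; rewrite !inE.
  + move=> S S' e; apply/setP => b; have [x <-] := pisurj b.
    by move/setP: e => /(_ x); rewrite /j !inE.
  + move=> S; rewrite /muC cj cX !natrM -mulf_div divff ?mulr1 //.
    by rewrite pnatr_eq0 -lt0n expn_gt0 spos.
- exact: imset_bauto.
- move=> S; apply/setP => y; have [z ->] := inj_surj hXinj y.
  rewrite /h mem_imset // !inE /pi SubK ffunE (P_E hrel (valP z)) /=.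
  by rewrite mem_imset.
move=> y.
have hiter k (S : {set X}) : iter k h S = iter k hX @: S.
  elim: k => [|k IH] /=; first by rewrite imset_id.
  by rewrite IH /h -imset_comp; apply: eq_imset.
have iterinj k : injective (iter k hX).
  by elim: k => [|k IH] //= x x' e; apply: IH; apply: hXinj.
have valiter k (z : X) : val (iter k hX z) = iter k (sh fp) (val z).
  by elim: k => [|k IH] //=; rewrite -IH.
rewrite hiter; apply/setP => w; have [z ->] := inj_surj (iterinj m.+1) w.
rewrite mem_imset // !inE /pi valiter (itersh_full fp) ffunE.
by rewrite mem_imset.
Qed.

Unset Implicit Arguments.

Theorem mainTheorem5 (dy : bool) (R : realType) (n : nat) (hn : (1 <= n)%N)
  (TA TB : finType) (muA : {set TA} -> R) (muB : {set TB} -> R)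
  (iota : {set TA} -> {set TB}) (g : {set TA} -> {set TA}) (f : {set TB} -> {set TB}) :
  fa_prob muA -> equi dy muA ->
  fa_prob muB -> equi dy muB ->
  measured_embedding muA muB iota ->
  is_bauto g -> is_bauto f ->
  (forall x, f (iota x) = iota (iter n g x)) ->
  exists (TC : finType) (muC : {set TC} -> R)
         (j : {set TB} -> {set TC}) (h : {set TC} -> {set TC}),
    [/\ fa_prob muC /\ equi dy muC,
        measured_embedding muB muC j,
        is_bauto h,
        (forall x, h (j (iota x)) = j (iota (g x))) &
        (forall y, iter n h (j y) = j (f y))].
Proof.
case: n hn => [//|m] _.
move=> hpA heA hpB heB [hib hiinj hmu] hg hf hfg.
have [cA hcA] := equi_const heA.
have [cB hcB] := equi_const heB.
have muAE := fa_card hpA hcA.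
have muBE := fa_card hpB hcB.
have totA : #|TA|%:R * cA = 1 by rewrite -cardsT -muAE; case: hpA.
have totB : #|TB|%:R * cB = 1 by rewrite -cardsT -muBE; case: hpB.
have [gp [gpinj hgE]] := bauto_point hg.
have [fp [fpinj hfE]] := bauto_point hf.
have [alpha [hI hsurj]] := bhom_point hib hiinj.
have iotaE S : iota S = [set b | alpha b \in S] by apply/setP => b; rewrite inE hI.
have iterg k a : iter k g [set a] = [set iter k gp a].
  by elim: k => [|k IH] //=; rewrite IH hgE imset_set1.
have hrel b : alpha (fp b) = iter m.+1 gp (alpha b).
  have : fp b \in f (iota [set alpha b]) by rewrite hfE mem_imset // hI in_set1.
  by rewrite hfg hI iterg in_set1 => /eqP.
have blk a : #|[set b | alpha b == a]|%:R * cB = cA.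
  rewrite -muBE -(hcA a).
  have -> : [set b | alpha b == a] = iota [set a] by apply/setP => b; rewrite hI !inE.
  by rewrite hmu.
have cBn0 : cB != 0.
  by apply/negP => /eqP e; move: totB; rewrite e mulr0 => /eqP; rewrite eq_sym oner_eq0.
have TBpos : (0 < #|TB|)%N.
  rewrite lt0n; apply/negP => /eqP e; move: totB.
  by rewrite e mul0r => /eqP; rewrite eq_sym oner_eq0.
have [b0 _] := card_gt0P TBpos.
pose s := #|[set b | alpha b == alpha b0]|.
have sc : s%:R * cB = cA := blk (alpha b0).
have hs a : #|[set b | alpha b == a]| = s.
  by apply/eqP; rewrite -(eqr_nat R); apply/eqP; apply: (mulIf cBn0); rewrite blk sc.
have hTB : #|TB| = (#|TA| * s)%N.
  apply/eqP; rewrite -(eqr_nat R); apply/eqP; apply: (mulIf cBn0).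
  by rewrite totB natrM -mulrA sc totA.
have hdy : dy -> exists k, (#|TB| * s ^ m = 2 ^ k)%N.
  move=> dyt; move: heA heB; rewrite dyt /= => -[kA [hA _]] [kB [hB _]].
  rewrite card_atoms in hA; rewrite card_atoms in hB.
  have spos : (0 < s)%N by apply/card_gt0P; exists b0; rewrite inE.
  have hk : (kA <= kB)%N.
    rewrite leqNgt; apply/negP => lt.
    have : (2 ^ kB < 2 ^ kA)%N by rewrite ltn_exp2l.
    by rewrite -hB hTB hA ltnNge leq_pmulr.
  have ss : s = (2 ^ (kB - kA))%N.
    apply/eqP; rewrite -(@eqn_pmul2l (2 ^ kA)) ?expn_gt0 //.
    by rewrite -hA -hTB hB hA -expnD subnKC.
  by exists (kB + (kB - kA) * m)%N; rewrite hB ss -expnM -expnD.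
have [TC [muC [j [h [hC [jb jinj jmu] hh h4 h5]]]]] :=
  @core dy R m TA TB alpha gp fp s gpinj fpinj hrel hs hsurj TBpos hdy.
have TBn0 : (#|TB|%:R : R) != 0 by rewrite pnatr_eq0 -lt0n.
have cBE : cB = #|TB|%:R^-1 by apply: (mulfI TBn0); rewrite totB divff.
exists TC, muC, j, h; split => //.
- by split => // S; rewrite jmu muBE cBE.
- by move=> x; rewrite !iotaE hgE; apply: h4.
- by move=> y; rewrite hfE; apply: h5.
Qed.
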